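(* Let $\xi\in\mathbb{R}$, $\alpha\ne0$ and $c>0$, let $\phi(u)=(1+u)^3(1-u)^3$ for $|u|\le1$ and $\phi(u)=0$ otherwise, and define $G:\mathbb{R}\to\mathbb{R}$ by $G(x)=x+\alpha\,\phi\big(\frac{x-\xi}{c}\big)(x-\xi)|x-\xi|$. If $c<\frac{1}{6|\alpha|}$, then $G'(x)>0$ for all $x\in\mathbb{R}$, $G'(x)=1$ for all $x$ with $|x-\xi|>c$, and therefore $G$ has a global inverse $G^{-1}$. *)

(* Defs.v *)
From Stdlib Require Import Reals Lra.
From Coquelicot Require Import Coquelicot.
Open Scope R_scope.

Definition phi (u : R) : R :=
  if Rle_dec (Rabs u) 1 then (1 + u) ^ 3 * (1 - u) ^ 3 else 0.

Definition G (xi alpha c : R) (x : R) : R :=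
  x + alpha * phi ((x - xi) / c) * (x - xi) * Rabs (x - xi).

(* Main.v *)
Require Import Defs.
From Stdlib Require Import Reals Lra.
From Coquelicot Require Import Coquelicot.
Open Scope R_scope.

Lemma glue (f f1 f2 : R -> R) (a l d : R) : 0 < d ->
  (forall x, a - d < x <= a -> f x = f1 x) ->
  (forall x, a <= x < a + d -> f x = f2 x) ->
  derivable_pt_lim f1 a l -> derivable_pt_lim f2 a l -> derivable_pt_lim f a l.
Proof.
  intros Hd H1 H2 D1 D2 e He.
  destruct (D1 e He) as [d1 Hd1]. destruct (D2 e He) as [d2 Hd2].
  assert (Hm : 0 < Rmin d (Rmin d1 d2)).
  { destruct d1, d2; simpl. repeat apply Rmin_pos; auto. }
  exists (mkposreal _ Hm). intros h hn hl. simpl in hl.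
  assert (hl1 : Rabs h < d) by (eapply Rlt_le_trans; [exact hl| apply Rmin_l]).
  assert (hl2 : Rabs h < d1) by (eapply Rlt_le_trans; [exact hl| eapply Rle_trans; [apply Rmin_r| apply Rmin_l]]).
  assert (hl3 : Rabs h < d2) by (eapply Rlt_le_trans; [exact hl| eapply Rle_trans; [apply Rmin_r| apply Rmin_r]]).
  apply Rabs_def2 in hl1.
  destruct (Rle_or_lt h 0) as [hneg|hpos].
  - rewrite (H1 (a+h)) by lra. rewrite (H1 a) by lra. apply Hd1; auto.
  - rewrite (H2 (a+h)) by lra. rewrite (H2 a) by lra. apply Hd2; auto.
Qed.

Section S.
Variables xi alpha c : R.
Hypothesis hc : 0 < c.

Definition Fp x := x + alpha * (1 - ((x - xi)/c)^2)^3 * (x - xi)^2.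
Definition Fn x := x - alpha * (1 - ((x - xi)/c)^2)^3 * (x - xi)^2.
Definition Dp x := 1 + alpha * (2*(x-xi)*(1-((x-xi)/c)^2)^2*(1-4*((x-xi)/c)^2)).
Definition Dn x := 1 - alpha * (2*(x-xi)*(1-((x-xi)/c)^2)^2*(1-4*((x-xi)/c)^2)).

Lemma dFp x : derivable_pt_lim Fp x (Dp x).
Proof. apply is_derive_Reals. unfold Fp, Dp. auto_derive; auto. field. apply Rgt_not_eq; exact hc. Qed.
Lemma dFn x : derivable_pt_lim Fn x (Dn x).
Proof. apply is_derive_Reals. unfold Fn, Dn. auto_derive; auto. field. apply Rgt_not_eq; exact hc. Qed.
Lemma dId x : derivable_pt_lim (fun x => x) x 1.
Proof. apply is_derive_Reals. auto_derive; auto. Qed.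

Lemma absdiv y : Rabs (y / c) = Rabs y / c.
Proof. rewrite Rabs_div by lra. rewrite (Rabs_right c) by lra. reflexivity. Qed.

Lemma divle a : a / c <= 1 <-> a <= c.
Proof.
  split; intro H.
  - apply Rmult_le_reg_r with (/c). apply Rinv_0_lt_compat; lra.
    rewrite Rinv_r by lra. exact H.
  - apply Rmult_le_reg_r with c; auto. unfold Rdiv. rewrite Rmult_assoc, Rinv_l by lra. lra.
Qed.

Lemma G_id x : c <= Rabs (x - xi) -> G xi alpha c x = x.
Proof.
  intro H. unfold G, phi. destruct (Rle_dec _ 1) as [h|h].
  - rewrite absdiv in h. apply divle in h.
    assert (E : Rabs (x - xi) = c) by lra.
    destruct (Rle_or_lt 0 (x-xi)) as [e|e].
    + rewrite Rabs_right in E by lra.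
      assert ((x-xi)/c = 1) by (rewrite E; field; lra). rewrite H0. ring.
    + rewrite Rabs_left in E by lra.
      assert ((x-xi)/c = -1) by (replace (x - xi) with (-c) by lra; field; lra). rewrite H0. ring.
  - ring.
Qed.

Lemma G_p x : 0 <= x - xi <= c -> G xi alpha c x = Fp x.
Proof.
  intro H. unfold G, phi, Fp. destruct (Rle_dec _ 1) as [h|h].
  - rewrite (Rabs_right (x - xi)) by lra. ring.
  - exfalso. apply h. rewrite absdiv, divle, Rabs_right by lra. lra.
Qed.

Lemma G_n x : -c <= x - xi <= 0 -> G xi alpha c x = Fn x.
Proof.
  intro H. unfold G, phi, Fn. destruct (Rle_dec _ 1) as [h|h].
  - rewrite (Rabs_left1 (x - xi)) by lra. ring.
  - exfalso. apply h. rewrite absdiv, divle, Rabs_left1 by lra. lra.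
Qed.

Definition DG x := if Rle_dec (Rabs (x - xi)) c then
   (if Rle_dec 0 (x - xi) then Dp x else Dn x) else 1.

Lemma dG x : derivable_pt_lim (G xi alpha c) x (DG x).
Proof.
  unfold DG.
  destruct (Rle_dec (Rabs (x - xi)) c) as [h|h].
  - destruct (Rle_dec 0 (x - xi)) as [h0|h0].
    + rewrite Rabs_right in h by lra.
      destruct (Req_dec (x - xi) 0) as [e|e].
      * apply glue with Fn Fp c; auto.
        -- intros y Hy. apply G_n. lra.
        -- intros y Hy. apply G_p. lra.
        -- replace (Dp x) with (Dn x) by (unfold Dp, Dn; rewrite e; ring). apply dFn.
        -- apply dFp.
      * destruct (Req_dec (x - xi) c) as [e2|e2].
        -- apply glue with Fp (fun y => y) c; auto.
           ++ intros y Hy. apply G_p. lra.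
           ++ intros y Hy. apply G_id. rewrite Rabs_right; lra.
           ++ apply dFp.
           ++ replace (Dp x) with 1. apply dId.
              unfold Dp. replace ((x-xi)/c) with 1 by (rewrite e2; field; lra). ring.
        -- apply glue with Fp Fp (Rmin (x - xi) (c - (x - xi))); auto.
           ++ apply Rmin_pos; lra.
           ++ intros y Hy. apply G_p. pose proof (Rmin_l (x - xi) (c - (x - xi))).
              pose proof (Rmin_r (x - xi) (c - (x - xi))). lra.
           ++ intros y Hy. apply G_p. pose proof (Rmin_l (x - xi) (c - (x - xi))).
              pose proof (Rmin_r (x - xi) (c - (x - xi))). lra.
           ++ apply dFp.
           ++ apply dFp.
    + rewrite Rabs_left in h by lra.
      destruct (Req_dec (x - xi) (-c)) as [e2|e2].
      * apply glue with (fun y => y) Fn c; auto.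
        -- intros y Hy. apply G_id. rewrite Rabs_left1; lra.
        -- intros y Hy. apply G_n. lra.
        -- replace (Dn x) with 1. apply dId.
           unfold Dn. replace ((x-xi)/c) with (-1) by (rewrite e2; field; lra). ring.
        -- apply dFn.
      * apply glue with Fn Fn (Rmin (xi - x) (c + (x - xi))); auto.
        -- apply Rmin_pos; lra.
        -- intros y Hy. apply G_n. pose proof (Rmin_l (xi - x) (c + (x - xi))).
           pose proof (Rmin_r (xi - x) (c + (x - xi))). lra.
        -- intros y Hy. apply G_n. pose proof (Rmin_l (xi - x) (c + (x - xi))).
           pose proof (Rmin_r (xi - x) (c + (x - xi))). lra.
        -- apply dFn.
        -- apply dFn.
  - apply Rnot_le_lt in h.
    destruct (Rle_or_lt 0 (x - xi)) as [h0|h0].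
    + rewrite Rabs_right in h by lra.
      apply glue with (fun y => y) (fun y => y) (x - xi - c); try lra; try apply dId;
       intros y Hy; apply G_id; rewrite Rabs_right; lra.
    + rewrite Rabs_left in h by lra.
      apply glue with (fun y => y) (fun y => y) (xi - x - c); try lra; try apply dId;
       intros y Hy; apply G_id; rewrite Rabs_left; lra.
Qed.

Lemma Tbound x : Rabs (x - xi) <= c ->
  Rabs (2*(x-xi)*(1-((x-xi)/c)^2)^2*(1-4*((x-xi)/c)^2)) <= 6 * c.
Proof.
  intro H. set (u := (x - xi)/c).
  assert (Hu : Rabs u <= 1) by (unfold u; rewrite absdiv, divle; lra).
  assert (Hv0 : 0 <= u^2) by (apply pow2_ge_0).
  assert (Hv1 : u^2 <= 1).
  { replace (u^2) with (Rabs u * Rabs u). 2:{ rewrite <- Rabs_mult. simpl. rewrite Rmult_1_r. apply Rabs_right. apply Rle_ge, Rle_0_sqr. }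
    pose proof (Rabs_pos u). nra. }
  set (v := u^2) in *.
  rewrite !Rabs_mult.
  assert (A1 : Rabs 2 * Rabs (x - xi) <= 2 * c) by (rewrite (Rabs_right 2) by lra; lra).
  assert (A2 : Rabs ((1 - v)^2) <= 1).
  { rewrite Rabs_right. 2:{ apply Rle_ge. apply pow2_ge_0. } nra. }
  assert (A3 : Rabs (1 - 4 * v) <= 3) by (apply Rabs_le; lra).
  pose proof (Rabs_pos 2). pose proof (Rabs_pos (x - xi)).
  pose proof (Rabs_pos ((1-v)^2)). pose proof (Rabs_pos (1 - 4*v)).
  assert (0 <= Rabs 2 * Rabs (x - xi)) by (apply Rmult_le_pos; auto).
  assert (Rabs 2 * Rabs (x - xi) * Rabs ((1 - v) ^ 2) <= 2 * c) by nra.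
  assert (0 <= Rabs 2 * Rabs (x - xi) * Rabs ((1 - v) ^ 2)) by (apply Rmult_le_pos; auto).
  nra.
Qed.

Lemma DG_pos x : 6 * c * Rabs alpha < 1 -> DG x > 0.
Proof.
  intro Ha. unfold DG. destruct (Rle_dec _ c) as [h|h]; [|lra].
  pose proof (Tbound x h) as T.
  set (t := 2*(x-xi)*(1-((x-xi)/c)^2)^2*(1-4*((x-xi)/c)^2)) in *.
  assert (Rabs (alpha * t) < 1).
  { rewrite Rabs_mult. pose proof (Rabs_pos alpha).
    apply Rle_lt_trans with (Rabs alpha * (6*c)). apply Rmult_le_compat_l; auto. lra. }
  apply Rabs_def2 in H.
  destruct (Rle_dec 0 (x - xi)); unfold Dp, Dn; fold t; lra.
Qed.
End S.

Theorem lemma2p4 (xi alpha c : R) (halpha : alpha <> 0) (hc : 0 < c)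
  (hsmall : c < 1 / (6 * Rabs alpha)) :
  (forall x : R, ex_derive (G xi alpha c) x /\ Derive (G xi alpha c) x > 0) /\
  (forall x : R, Rabs (x - xi) > c -> Derive (G xi alpha c) x = 1) /\
  (exists Ginv : R -> R,
      (forall x : R, Ginv (G xi alpha c x) = x) /\
      (forall y : R, G xi alpha c (Ginv y) = y)).
Proof.
  assert (Ha : 6 * c * Rabs alpha < 1).
  { pose proof (Rabs_pos_lt _ halpha).
    apply Rmult_lt_compat_r with (r := 6 * Rabs alpha) in hsmall; [|lra].
    replace (1 / (6 * Rabs alpha) * (6 * Rabs alpha)) with 1 in hsmall by (field; lra). lra. }
  assert (HD : forall x, is_derive (G xi alpha c) x (DG xi alpha c x)).
  { intro x. apply is_derive_Reals. apply dG; auto. }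
  assert (HDe : forall x, Derive (G xi alpha c) x = DG xi alpha c x).
  { intro x. apply is_derive_unique. apply HD. }
  assert (Hinc : forall x y, x < y -> G xi alpha c x < G xi alpha c y).
  { intros x y hxy. apply (incr_function _ m_infty p_infty (DG xi alpha c)); simpl; auto.
    intros z _ _. apply DG_pos; auto. }
  assert (Hcont : continuity (G xi alpha c)).
  { intro x. apply continuity_pt_filterlim.
    apply (ex_derive_continuous (G xi alpha c) x). eexists. apply HD. }
  split; [|split].
  - intro x. split. eexists. apply HD. rewrite HDe. apply DG_pos; auto.
  - intros x Hx. rewrite HDe. unfold DG. destruct (Rle_dec _ c); [lra|reflexivity].
  - assert (Hy : forall y, Rmin (G xi alpha c (Rmin y (xi - c))) (G xi alpha c (Rmax y (xi + c)))
                 <= y <= Rmax (G xi alpha c (Rmin y (xi - c))) (G xi alpha c (Rmax y (xi + c)))).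
    { intro y. rewrite (G_id xi alpha c hc (Rmin y (xi - c))).
      2:{ pose proof (Rmin_r y (xi - c)). rewrite Rabs_left1; lra. }
      rewrite (G_id xi alpha c hc (Rmax y (xi + c))).
      2:{ pose proof (Rmax_r y (xi + c)). rewrite Rabs_right; lra. }
      pose proof (Rmin_l y (xi - c)). pose proof (Rmax_l y (xi + c)).
      split; [apply Rle_trans with (Rmin y (xi - c)); [apply Rmin_l|lra]
             |apply Rle_trans with (Rmax y (xi + c)); [lra|apply Rmax_r]]. }
    exists (fun y => proj1_sig (IVT_gen _ _ _ y Hcont (Hy y))).
    split.
    + intro x. simpl. pose proof (proj2_sig (IVT_gen _ _ _ _ Hcont (Hy (G xi alpha c x)))) as [_ Hz].
      set (z := proj1_sig _) in *.
      destruct (Rtotal_order z x) as [h|[h|h]]; auto.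
      * apply Hinc in h. lra.
      * apply Hinc in h. lra.
    + intro y. simpl. exact (proj2 (proj2_sig (IVT_gen _ _ _ _ Hcont (Hy y)))).
Qed.
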